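(* For all finite sets of formulas $\Gamma,\Delta$: $\Gamma\Vdash\Delta$ if and only if $\Gamma\Vdash_{\mathcal{ST}}\Delta$.
   Context: Fix a countably infinite set $\mathsf{At}$ of atoms. Formulas are built from atoms and the constant $\bot$ using the binary connectives $\land,\lor,\to$. All contexts ($\Gamma,\Delta,\Theta,\Sigma,\dots$) are finite sets (not multisets) of formulas; a comma denotes union; a subscript $\mathsf{At}$ indicates a finite set of atoms. An atomic sequent has the form $\Gamma_{\mathsf{At}} \Rightarrow \Delta_{\mathsf{At}}$. An atomic rule has finitely many (possibly zero) atomic sequents as premises and one atomic sequent as conclusion; a rule with zero premises is an atomic axiom. A base is a (possibly empty) set of atomic rules; $\mathcal{C}\supseteq\mathcal{B}$ ($\mathcal{C}$ extends $\mathcal{B}$) if $\mathcal{C}$ contains every rule of $\mathcal{B}$. Derivability $\vdash_{\mathcal{B}}$ of atomic sequents is the least relation such that: (Axiom/Weakening) if an atomic axiom with conclusion $\Gamma_{\mathsf{At}}\Rightarrow\Delta_{\mathsf{At}}$ is in $\mathcal{B}$, then $\vdash_{\mathcal{B}} \Theta_{\mathsf{At}},\Gamma_{\mathsf{At}}\Rightarrow\Delta_{\mathsf{At}},\Sigma_{\mathsf{At}}$ for all sets of atoms $\Theta_{\mathsf{At}},\Sigma_{\mathsf{At}}$; (Mix) if a rule with premises $\Gamma^i_{\mathsf{At}}\Rightarrow\Delta^i_{\mathsf{At}}$ ($1\le i\le n$) and conclusion $\Gamma_{\mathsf{At}}\Rightarrow\Delta_{\mathsf{At}}$ is in $\mathcal{B}$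 and $\vdash_{\mathcal{B}} \Theta^i_{\mathsf{At}},\Gamma^i_{\mathsf{At}}\Rightarrow\Delta^i_{\mathsf{At}},\Sigma^i_{\mathsf{At}}$ for each $i$, then $\vdash_{\mathcal{B}} \Theta^1_{\mathsf{At}},\dots,\Theta^n_{\mathsf{At}},\Gamma_{\mathsf{At}}\Rightarrow\Delta_{\mathsf{At}},\Sigma^1_{\mathsf{At}},\dots,\Sigma^n_{\mathsf{At}}$. Support $\Vdash_{\mathcal{B}}$: (At) $\Vdash_{\mathcal{B}}\Gamma_{\mathsf{At}}$ iff $\vdash_{\mathcal{B}}\ \Rightarrow\Gamma_{\mathsf{At}}$; ($\land$) $\Vdash_{\mathcal{B}} A\land B,\Gamma$ iff $\Vdash_{\mathcal{B}}A,\Gamma$ and $\Vdash_{\mathcal{B}}B,\Gamma$; ($\lor$) $\Vdash_{\mathcal{B}}A\lor B,\Gamma$ iff $\Vdash_{\mathcal{B}}A,B,\Gamma$; ($\to$) $\Vdash_{\mathcal{B}}A\to B,\Gamma$ iff $A\Vdash_{\mathcal{B}}B,\Gamma$; ($\bot$) $\Vdash_{\mathcal{B}}\bot,\Gamma$ iff $\Vdash_{\mathcal{B}}\Gamma$; (Inf) for $n\ge1$, $\{A^1,\dots,A^n\}\Vdash_{\mathcal{B}}\Delta$ iff for every $\mathcal{C}\supseteq\mathcal{B}$ and all sets of atoms $\Theta^1_{\mathsf{At}},\dots,\Theta^n_{\mathsf{At}}$, if $\Vdash_{\mathcal{C}}\Theta^i_{\mathsf{At}},A^i$ for all $i$ then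 $\Vdash_{\mathcal{C}}\Theta^1_{\mathsf{At}},\dots,\Theta^n_{\mathsf{At}},\Delta$ (and $\varnothing\Vdash_{\mathcal{B}}\Delta$ means $\Vdash_{\mathcal{B}}\Delta$). The atomic identity rule $\mathsf{Ainit}$ is the atomic axiom $\Gamma_{\mathsf{At}},p\Rightarrow p,\Delta_{\mathsf{At}}$; the atomic cut rule $\mathsf{Acut}$ has premises $\Gamma^1_{\mathsf{At}}\Rightarrow\Delta^1_{\mathsf{At}},p$ and $p,\Gamma^2_{\mathsf{At}}\Rightarrow\Delta^2_{\mathsf{At}}$ and conclusion $\Gamma^1_{\mathsf{At}},\Gamma^2_{\mathsf{At}}\Rightarrow\Delta^1_{\mathsf{At}},\Delta^2_{\mathsf{At}}$. $\mathcal{ST}$ is the base consisting of all instances of $\mathsf{Ainit}$ and $\mathsf{Acut}$ (all atoms $p$, all sets of atoms). Validity: $\Gamma\Vdash\Delta$ iff $\Gamma\Vdash_{\mathcal{B}}\Delta$ for every base $\mathcal{B}\supseteq\mathcal{ST}$. *)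

(* Defs.v *)
From HB Require Import structures.
From mathcomp Require Import all_boot.
From mathcomp Require Import finmap.
Set Implicit Arguments. Unset Strict Implicit. Unset Printing Implicit Defensive.
Local Open Scope fset_scope.

Definition atom := nat.

Inductive formula : Type :=
| Atom of atom
| Bot
| And of formula & formula
| Or  of formula & formula
| Imp of formula & formula.

Fixpoint fcode (f : formula) : GenTree.tree nat :=
  match f with
  | Atom p => GenTree.Leaf p
  | Bot => GenTree.Node 0 [::]
  | And a b => GenTree.Node 1 [:: fcode a; fcode b]
  | Or a b => GenTree.Node 2 [:: fcode a; fcode b]
  | Imp a b => GenTree.Node 3 [:: fcode a; fcode b]
  end.
Fixpoint fdecode (t : GenTree.tree nat) : option formula :=
  match t with
  | GenTree.Leaf p => Some (Atom p)
  | GenTree.Node 0 [::] => Some Bot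
  | GenTree.Node 1 [:: a; b] =>
      if (fdecode a, fdecode b) is (Some x, Some y) then Some (And x y) else None
  | GenTree.Node 2 [:: a; b] =>
      if (fdecode a, fdecode b) is (Some x, Some y) then Some (Or x y) else None
  | GenTree.Node 3 [:: a; b] =>
      if (fdecode a, fdecode b) is (Some x, Some y) then Some (Imp x y) else None
  | _ => None
  end.
Lemma fcodeK : pcancel fcode fdecode.
Proof. by elim=> //= [a -> b ->|a -> b ->|a -> b ->]. Qed.
HB.instance Definition _ := Countable.copy formula (pcan_type fcodeK).

Definition asequent := ({fset atom} * {fset atom})%type.

Record arule := ARule { premises : seq asequent; conclusion : asequent }.

Definition base := arule -> Prop.
Definition extends (C B : base) : Prop := forall r, B r -> C r.

Inductive derivable (B : base) : asequent -> Prop :=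
| der_axiom (r : arule) (Th Si : {fset atom}) :
    B r -> premises r = [::] ->
    derivable B (Th `|` (conclusion r).1, (conclusion r).2 `|` Si)
| der_mix (r : arule) (Ths Sis : seq {fset atom}) :
    B r -> size Ths = size (premises r) -> size Sis = size (premises r) ->
    (forall i, i < size (premises r) ->
       derivable B (nth fset0 Ths i `|` (nth (fset0, fset0) (premises r) i).1,
                    (nth (fset0, fset0) (premises r) i).2 `|` nth fset0 Sis i)) ->
    derivable B ((\bigcup_(t <- Ths) t) `|` (conclusion r).1,
                 (conclusion r).2 `|` \bigcup_(t <- Sis) t).

Definition Ainit (G D : {fset atom}) (p : atom) : arule :=
  ARule [::] (p |` G, p |` D).
Definition Acut (G1 D1 G2 D2 : {fset atom}) (p : atom) : arule :=
  ARule [:: (G1, p |` D1); (p |` G2, D2)] (G1 `|` G2, D1 `|` D2).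
Definition ST : base := fun r =>
  (exists G D p, r = Ainit G D p) \/
  (exists G1 D1 G2 D2 p, r = Acut G1 D1 G2 D2 p).

(** A context Theta_At, Delta is represented by an accumulator
    [acc] holding its atoms and a list of remaining formulas; complex formulas
    are decomposed from the head of the list.  The first argument is fuel,
    which is always large enough when started at [weight] (see [sup]). *)
Fixpoint fsize (A : formula) : nat :=
  match A with
  | Atom _ | Bot => 1
  | And a b | Or a b | Imp a b => (fsize a + fsize b).+1
  end.
Definition weight (s : seq formula) : nat := sumn (map fsize s).

Fixpoint supF (n : nat) (B : base) (acc : {fset atom}) (s : seq formula) : Prop :=
  match s with
  | [::] => derivable B (fset0, acc)
  | A :: rest =>
    match n with
    | 0 => False
    | n'.+1 =>
      match A with
      | Atom p => supF n' B (p |` acc) rest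
      | Bot => supF n' B acc rest
      | And a b => supF n' B acc (a :: rest) /\ supF n' B acc (b :: rest)
      | Or a b => supF n' B acc (a :: b :: rest)
      | Imp a b =>                                                (* (->) + (Inf), n=1 *)
          forall C : base, extends C B ->
          forall Th : {fset atom},
            supF n' C Th [:: a] -> supF n' C (Th `|` acc) (b :: rest)
      end
    end
  end.

Definition sup (B : base) (acc : {fset atom}) (s : seq formula) : Prop :=
  supF (weight s) B acc s.

Definition supports (B : base) (D : {fset formula}) : Prop :=
  sup B fset0 (enum_fset D).

Definition infers (B : base) (G D : {fset formula}) : Prop :=
  if G == fset0 then supports B D
  else forall C : base, extends C B ->
       forall Th : formula -> {fset atom},
         (forall A, A \in G -> sup C (Th A) [:: A]) ->
         sup C (\bigcup_(A <- enum_fset G) Th A) (enum_fset D).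

Definition valid (G D : {fset formula}) : Prop :=
  forall B : base, extends B ST -> infers B G D.

(* Main.v *)
Require Import Defs.
From mathcomp Require Import all_boot finmap.

Lemma derivable_mono (B C : base) s : extends C B -> derivable B s -> derivable C s.
Proof.
move=> hCB; elim=> {s}.
- by move=> r Th Si Br hp; apply: der_axiom => //; apply: hCB.
- move=> r Ths Sis Br h1 h2 _ IH; apply: der_mix => //; first exact: hCB.
Qed.

Lemma supF_mono n : forall (B C : base) acc s, extends C B -> supF n B acc s -> supF n C acc s.
Proof.
elim: n => [|n IH] B C acc [|A rest] hCB //=.
- exact: derivable_mono.
- exact: derivable_mono.
- case: A => [p||a b|a b|a b] /=.
  + exact: IH.
  + exact: IH.
  + by case=> h1 h2; split; apply: (IH B).
  + exact: IH.
  + move=> h E hEC; apply: h => r Br; apply: hEC; exact: hCB.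
Qed.

Theorem theorem1 (G D : {fset formula}) : valid G D <-> infers ST G D.
Proof.
split.
- by move=> h; apply: h.
- move=> h B hB; move: h; rewrite /infers; case: ifP => _.
  + by rewrite /supports /sup; apply: supF_mono.
  + move=> h C hCB; apply: h => r Sr; apply: hCB; exact: hB.
Qed.
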